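(* Let $p$ be a prime, let $c\in[0,1]$ and let $\Theta(t)\in\mathbb{F}_p(\!(t^{-1})\!)$ be a Laurent series that exhibits $c$-escape of mass with respect to the sequence $\{t^k\}_{k\ge0}$. Then, for any irreducible polynomial $P(t)\in\mathbb{F}_p[t]$, the Laurent series $\Theta(P(t))\in\mathbb{F}_p(\!(t^{-1})\!)$ exhibits $c$-escape of mass with respect to the sequence $\{P(t)^k\}_{k\ge0}$.
   Context: For $\Theta(t)=\sum_{i=-h}^\infty a_i t^{-i}\in\mathbb{F}_p(\!(t^{-1})\!)$ and a polynomial $P(t)$, $\Theta(P(t)):=\sum_{i=-h}^\infty a_iP(t)^{-i}\in\mathbb{F}_p(\!(t^{-1})\!)$. Escape of mass (defined for quadratic irrationals): for a quadratic irrational $\Theta\in\mathbb{F}_q(\!(t^{-1})\!)$ and an irreducible $P\in\mathbb{F}_q[t]$, each $\Theta\cdot P^k$ is a quadratic irrational whose continued fraction expansion (polynomial partial quotients, of degree $\ge1$ after the zeroth) is eventually periodic; let $\ell_{\Theta P^k}$ be the period length and $A_1^{[\Theta P^k]},\dots,A_{\ell_{\Theta P^k}}^{[\Theta P^k]}$ the partial quotients of one period. Set $R_{k,n}=\frac{\sum_{i=1}^{\ell_{\Theta P^k}}\max\{\deg A_i^{[\Theta P^k]}-n,0\}}{\sum_{i=1}^{\ell_{\Theta P^k}}\deg A_i^{[\Theta P^k]}}$. $\Theta$ exhibits $c$ escape of mass with respect to $\{P^k\}_{k\ge0}$ if $\lim_{n\to\infty}\liminf_{k\to\infty}R_{k,n}\ge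 c$. *)

(* Defs.v *)
From HB Require Import structures.
From mathcomp Require Import all_boot all_order all_algebra.
From mathcomp Require Import all_classical all_reals all_analysis.
Set Implicit Arguments. Unset Strict Implicit. Unset Printing Implicit Defensive.
Import Order.TTheory GRing.Theory Num.Theory.
Local Open Scope ring_scope.

(* Laurent series in t^{-1} over a field K:  x = sum_{e <= h} x e * t^e.     *)
(* (Paper: Theta = sum_{i >= -h} a_i t^{-i}; here x e = a_{-e}.)             *)
Section Laurent.
Variable K : fieldType.

Definition lseries := int -> K.

Definition is_laurent (x : lseries) : Prop :=
  exists h : int, forall e : int, h < e -> x e = 0.

Definition bnd (x : lseries) : int :=
  xget 0 [set h : int | forall e : int, h < e -> x e = 0].

Definition isum (a b : int) (f : int -> K) : K :=
  \sum_(k < absz (Num.max 0 (b - a + 1))) f (a + (k : nat)%:Z).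

Definition lpoly (P : {poly K}) : lseries :=
  fun e => if (0 <= e) then P`_(absz e) else 0.

Definition lone : lseries := lpoly 1.

Definition lsub (x y : lseries) : lseries := fun e => x e - y e.

(* Cauchy product (all nonzero terms lie in the summation window) *)
Definition lmul (x y : lseries) : lseries :=
  fun e => isum (e - bnd y) (bnd x) (fun i => x i * y (e - i)).

Definition linv (x : lseries) : lseries :=
  fun e => xget 0 [set a : K | exists y : lseries,
                     [/\ is_laurent y, lmul x y = lone & y e = a]].

Definition lexp (x : lseries) (n : nat) : lseries := iter n (lmul x) lone.

Definition lpowz (P : {poly K}) (e : int) : lseries :=
  if (0 <= e) then lpoly (P ^+ absz e) else lexp (linv (lpoly P)) (absz e).

(* Theta(P(t)) := sum_e [t^e]Theta * P^e.  For deg P >= 1 the coefficient of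
   t^m only receives contributions from exponents e in [min m 0, bnd x]. *)
Definition lsubst (x : lseries) (P : {poly K}) : lseries :=
  fun m => isum (Num.min m 0) (bnd x) (fun e => x e * lpowz P e m).

Definition lrational (x : lseries) : Prop :=
  exists u v : {poly K}, v != 0 /\ lmul (lpoly v) x = lpoly u.

Definition quadratic_irrational (x : lseries) : Prop :=
  [/\ is_laurent x, ~ lrational x &
      exists a b c : {poly K}, a != 0 /\
        (forall e, lmul (lpoly a) (lmul x x) e + lmul (lpoly b) x e
                   + lpoly c e = 0)].

Definition polypart (y : lseries) (Q : {poly K}) : Prop :=
  forall e : nat, y e%:Z = Q`_e.

Definition is_cf (x : lseries) (A : nat -> {poly K}) : Prop :=
  exists th : nat -> lseries, th 0%N = x /\
    forall n, [/\ is_laurent (th n), polypart (th n) (A n) &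
                  lmul (th n.+1) (lsub (th n) (lpoly (A n))) = lone].

Definition cf_periodic (A : nat -> {poly K}) (N l : nat) : Prop :=
  (0 < l)%N /\ forall n, (N <= n)%N -> A (n + l)%N = A n.

Definition deg (Q : {poly K}) : nat := (size Q).-1.

Variable R : realType.

(* R_{k,n}: the value of the ratio computed on one period of the CF expansion
   of x * P^k (independent of the chosen period window). *)
Definition ratio (A : nat -> {poly K}) (N l n : nat) : R :=
  ((\sum_(N <= i < N + l) (deg (A i) - n)%N)%:R /
   (\sum_(N <= i < N + l) deg (A i))%:R).

Definition Rkn (x : lseries) (P : {poly K}) (k n : nat) : R :=
  xget 0 [set r : R | exists (A : nat -> {poly K}) (N l : nat),
            [/\ is_cf (lmul x (lpoly (P ^+ k))) A, cf_periodic A N l &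
                r = ratio A N l n]].

Definition escape_of_mass (x : lseries) (P : {poly K}) (c : R) : Prop :=
  quadratic_irrational x /\
  (c%:E <= limn (fun n => limn_einf (fun k => (Rkn x P k n)%:E)))%E.

End Laurent.

(* Main.v *)
Require Import Defs.
From HB Require Import structures.
From mathcomp Require Import all_boot all_order all_algebra.
From mathcomp Require Import all_classical all_reals all_analysis.
From mathcomp Require Import zify ring lra.
Require Import Defs.
Set Implicit Arguments. Unset Strict Implicit. Unset Printing Implicit Defensive.
Import Order.TTheory GRing.Theory Num.Theory.
Local Open Scope ring_scope.

Section Sums.
Variable K : fieldType.

Definition zrange (a b : int) : seq int :=
  [seq a + (k : nat)%:Z | k <- iota 0 (absz (Num.max 0%R (b - a + 1)%R))].

Lemma isumE a b (f : int -> K) : isum a b f = \sum_(i <- zrange a b) f i.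
Proof.
by rewrite /isum big_map -(big_mkord xpredT (fun k => f (a + k%:Z))) /index_iota subn0.
Qed.

Lemma mem_zrange a b i : (i \in zrange a b) = (a <= i <= b).
Proof.
apply/mapP/idP => [[k]|/andP[h1 h2]].
  by rewrite mem_iota add0n => /andP[_ hk] ->; apply/andP; split; lia.
exists (absz (i - a)); first by rewrite mem_iota add0n; apply/andP; split; lia.
lia.
Qed.

Lemma uniq_zrange a b : uniq (zrange a b).
Proof.
rewrite map_inj_uniq ?iota_uniq // => x y /addrI /eqP.
by rewrite eqz_nat => /eqP.
Qed.

Definition supp_in (f : int -> K) a b := forall i, f i != 0 -> a <= i <= b.

Lemma isum_eq a b a' b' (f : int -> K) :
  (forall i, f i != 0 -> (a <= i <= b) && (a' <= i <= b')) ->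
  isum a b f = isum a' b' f.
Proof.
move=> H; rewrite !isumE.
rewrite (bigID (fun i => a' <= i <= b')) /= [X in _ + X]big1 ?addr0; last first.
  move=> i /negbTE hi; apply/eqP/negPn/negP => /H /andP[_]; rewrite hi.
  by [].
rewrite [RHS](bigID (fun i => a <= i <= b)) /= [X in _ + X]big1 ?addr0; last first.
  move=> i /negbTE hi; apply/eqP/negPn/negP => /H /andP[]; rewrite hi.
  by [].
rewrite -big_filter -[RHS]big_filter; apply: perm_big; apply: uniq_perm;
  rewrite ?filter_uniq ?uniq_zrange // => i.
by rewrite !mem_filter !mem_zrange andbC.
Qed.

Lemma isum_empty a b (f : int -> K) : b < a -> isum a b f = 0.
Proof.
move=> h; rewrite isumE big_seq big1 // => i; rewrite mem_zrange; lia.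
Qed.

Lemma isum1 a (f : int -> K) : isum a a f = f a.
Proof.
rewrite /isum.
have -> : absz (Num.max 0 (a - a + 1)) = 1%N by lia.
by rewrite big_ord1 addr0.
Qed.

Definition fsbound (f : int -> K) : int :=
  xget 0 [set M : int | forall i, f i != 0 -> `|i| <= M].

Definition fsum (f : int -> K) : K := isum (- fsbound f) (fsbound f) f.

Definition fin (f : int -> K) := exists M : int, forall i, f i != 0 -> `|i| <= M.

Lemma fsbound_ok f : fin f -> forall i, f i != 0 -> `|i| <= fsbound f.
Proof. by move=> hf; apply: (xgetPex 0 hf). Qed.

Lemma fsumE (f : int -> K) a b : supp_in f a b -> fsum f = isum a b f.
Proof.
move=> H.
have hf : fin f.
  exists (`|a| + `|b|) => i /H; lia.
apply: isum_eq => i hi; apply/andP; split; last exact: H.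
have := fsbound_ok hf hi; lia.
Qed.

Lemma fin_supp (f : int -> K) a b : supp_in f a b -> fin f.
Proof. by move=> H; exists (`|a| + `|b|) => i /H; lia. Qed.

Lemma fsum0 (f : int -> K) : (forall i, f i = 0) -> fsum f = 0.
Proof.
move=> h; rewrite (@fsumE _ 0 0) ?isum1 // => i; rewrite h eqxx //.
Qed.

Lemma fsum1 (f : int -> K) c : (forall i, i != c -> f i = 0) -> fsum f = f c.
Proof.
move=> h; rewrite (@fsumE _ c c) ?isum1 // => i; apply: contraR => hi.
rewrite h //; apply/eqP => ei; move: hi; rewrite ei; lia.
Qed.

Lemma eq_fsum (f g : int -> K) : (forall i, f i = g i) -> fsum f = fsum g.
Proof. by move=> h; have -> : f = g by apply: funext. Qed.

Lemma fsumD (f g : int -> K) : fin f -> fin g ->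
  fsum (fun i => f i + g i) = fsum f + fsum g.
Proof.
move=> [M hM] [N hN].
have sf : supp_in f (- (`|M| + `|N|)) (`|M| + `|N|).
  by move=> i /hM; lia.
have sg : supp_in g (- (`|M| + `|N|)) (`|M| + `|N|).
  by move=> i /hN; lia.
rewrite (fsumE sf) (fsumE sg) (@fsumE _ (- (`|M| + `|N|)) (`|M| + `|N|)).
  by rewrite !isumE big_split.
move=> i hi; case: (eqVneq (f i) 0) => [fi0|/sf //].
by move: hi; rewrite fi0 add0r => /sg.
Qed.

Lemma isum_map (g : int -> int) a b a' b' (f : int -> K) : injective g ->
  (forall j, (j \in map g (zrange a b)) = (a' <= j <= b')) ->
  isum a b (fun i => f (g i)) = isum a' b' f.
Proof.
move=> ig hm; rewrite !isumE -(big_map g xpredT f).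
apply: perm_big; apply: uniq_perm.
- by rewrite (map_inj_uniq ig) uniq_zrange.
- exact: uniq_zrange.
by move=> j; rewrite hm mem_zrange.
Qed.

Lemma fsum_shift (f : int -> K) a : fin f -> fsum (fun b => f (a + b)) = fsum f.
Proof.
move=> [M hM].
rewrite (@fsumE _ (- M - a) (M - a)); last by move=> i /hM; lia.
rewrite (@fsumE _ (- M) M); last by move=> i /hM; lia.
have ig : injective (fun b : int => a + b) by move=> x y /addrI.
apply: isum_map => // j.
have := mem_map ig (zrange (- M - a) (M - a)) (j - a).
rewrite /= (_ : a + (j - a) = j); last by ring.
by move=> ->; rewrite mem_zrange; lia.
Qed.

Lemma fsum_refl (f : int -> K) e : fin f -> fsum (fun b => f (e - b)) = fsum f.
Proof.
move=> [M hM].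
rewrite (@fsumE _ (e - M) (e + M)); last by move=> i /hM; lia.
rewrite (@fsumE _ (- M) M); last by move=> i /hM; lia.
have ig : injective (fun b : int => e - b) by move=> x y /addrI /oppr_inj.
apply: isum_map => // j.
have := mem_map ig (zrange (e - M) (e + M)) (e - j).
rewrite /= (_ : e - (e - j) = j); last by ring.
by move=> ->; rewrite mem_zrange; lia.
Qed.

Lemma fsum_exchange (F : int -> int -> K) :
  (exists M, forall i j, F i j != 0 -> `|i| <= M /\ `|j| <= M) ->
  fsum (fun i => fsum (F i)) = fsum (fun j => fsum (fun i => F i j)).
Proof.
move=> [M hM].
have h1 : forall i, fsum (F i) = isum (- M) M (F i).
  by move=> i; apply: fsumE => j /hM; lia.
have h2 : forall j, fsum (fun i => F i j) = isum (- M) M (fun i => F i j).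
  by move=> j; apply: fsumE => i /hM; lia.
rewrite (eq_fsum h1) (eq_fsum h2).
rewrite (@fsumE _ (- M) M); last first.
  move=> i; apply: contraR => hi; rewrite isumE big1 // => j _.
  apply/eqP/negPn/negP => /hM; lia.
rewrite (@fsumE _ (- M) M); last first.
  move=> j; apply: contraR => hj; rewrite isumE big1 // => i _.
  apply/eqP/negPn/negP => /hM; lia.
rewrite !isumE; under eq_bigr do rewrite isumE.
rewrite exchange_big /=; apply: eq_bigr => j _; by rewrite isumE.
Qed.

Lemma fsumMl (f : int -> K) c : fin f -> fsum (fun i => c * f i) = c * fsum f.
Proof.
move=> [M hM].
rewrite (@fsumE _ (- M) M); last by move=> i; rewrite mulf_eq0 negb_or => /andP[_ /hM]; lia.
rewrite (@fsumE _ (- M) M); last by move=> i /hM; lia.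
by rewrite !isumE mulr_sumr.
Qed.

Lemma fsumMr (f : int -> K) c : fin f -> fsum (fun i => f i * c) = fsum f * c.
Proof.
move=> hf; rewrite mulrC -fsumMl //; apply: eq_fsum => i; exact: mulrC.
Qed.

End Sums.


Section LSeries.
Variable K : fieldType.
Implicit Types x y z : lseries K.

Definition ub x (h : int) := forall e, h < e -> x e = 0.

Lemma ub_nz x h e : ub x h -> x e != 0 -> e <= h.
Proof. by move=> u; apply: contraR; rewrite -ltNge => /u ->. Qed.

Lemma ub_le x h h' : ub x h -> h <= h' -> ub x h'.
Proof. by move=> u hh e he; apply: u; lia. Qed.

Lemma bnd_ub x : is_laurent x -> ub x (bnd x).
Proof. by move=> hx; apply: (xgetPex 0 hx). Qed.

Lemma ub_laurent x h : ub x h -> is_laurent x.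
Proof. by exists h. Qed.

Lemma nz_mul (a b : K) : a * b != 0 -> a != 0 /\ b != 0.
Proof. by rewrite mulf_eq0 negb_or => /andP. Qed.

Lemma fin_mulF x y e : is_laurent x -> is_laurent y -> fin (fun i => x i * y (e - i)).
Proof.
move=> /bnd_ub ux /bnd_ub uy; apply: (@fin_supp _ _ (e - bnd y) (bnd x)) => i.
move=> /nz_mul [/(ub_nz ux) h1 /(ub_nz uy) h2]; lia.
Qed.

Lemma lmulE x y e : is_laurent x -> is_laurent y ->
  lmul x y e = fsum (fun i => x i * y (e - i)).
Proof.
move=> lx ly; have ux := bnd_ub lx; have uy := bnd_ub ly.
symmetry; apply: fsumE => i /nz_mul [/(ub_nz ux) h1 /(ub_nz uy) h2]; lia.
Qed.

Lemma lmul_ub x y hx hy : ub x hx -> ub y hy -> ub (lmul x y) (hx + hy).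
Proof.
move=> ux uy e he; have lx := ub_laurent ux; have ly := ub_laurent uy.
rewrite lmulE //.
apply: fsum0 => i; apply/eqP/negPn/negP => /nz_mul [/(ub_nz ux) h1 /(ub_nz uy) h2].
lia.
Qed.

Lemma lmul_laurent x y : is_laurent x -> is_laurent y -> is_laurent (lmul x y).
Proof. by move=> /bnd_ub ux /bnd_ub uy; exact: ub_laurent (lmul_ub ux uy). Qed.

Lemma lmulC x y : is_laurent x -> is_laurent y -> lmul x y = lmul y x.
Proof.
move=> lx ly; apply: funext => e; rewrite !lmulE //.
rewrite -(fsum_refl e (fin_mulF e lx ly)); apply: eq_fsum => i.
by rewrite mulrC (_ : e - (e - i) = i) //; ring.
Qed.

Lemma lmulA x y z : is_laurent x -> is_laurent y -> is_laurent z ->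
  lmul (lmul x y) z = lmul x (lmul y z).
Proof.
move=> lx ly lz; apply: funext => e.
have ux := bnd_ub lx; have uy := bnd_ub ly; have uz := bnd_ub lz.
have lxy := lmul_laurent lx ly; have lyz := lmul_laurent ly lz.
rewrite lmulE // [RHS]lmulE //.
rewrite (@eq_fsum _ _ (fun j => fsum (fun i => x i * y (j - i) * z (e - j)))); last first.
  by move=> j; rewrite lmulE // -fsumMr //; apply: fin_mulF.
rewrite [RHS](@eq_fsum _ _ (fun i => fsum (fun l => x i * (y l * z (e - i - l))))); last first.
  by move=> i; rewrite lmulE // -fsumMl //; apply: fin_mulF.
rewrite fsum_exchange; last first.
  exists (`|e| + `|bnd x| + `|bnd y| + `|bnd z|) => j i.
  move=> /nz_mul [/nz_mul [/(ub_nz ux) h1 /(ub_nz uy) h2] /(ub_nz uz) h3]; lia.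
apply: eq_fsum => i.
rewrite -(@fsum_shift _ _ i); last first.
  apply: (@fin_supp _ _ (e - bnd z) (i + bnd y)) => j.
  move=> /nz_mul [/nz_mul [_ /(ub_nz uy) h2] /(ub_nz uz) h3]; lia.
apply: eq_fsum => l.
have e1 : i + l - i = l by ring.
have e2 : e - (i + l) = e - i - l by ring.
by rewrite e1 e2 mulrA.
Qed.

Lemma lmulDl x y z : is_laurent x -> is_laurent y -> is_laurent z ->
  lmul (fun e => x e + y e) z = fun e => lmul x z e + lmul y z e.
Proof.
move=> lx ly lz.
have lxy : is_laurent (fun e => x e + y e).
  have ux := bnd_ub lx; have uy := bnd_ub ly.
  exists (Num.max (bnd x) (bnd y)) => e he.
  by rewrite ux ?uy ?addr0 //; lia.
apply: funext => e; rewrite !lmulE // -fsumD; try exact: fin_mulF.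
by apply: eq_fsum => i; rewrite mulrDl.
Qed.

Lemma lpoly_ub (Q : {poly K}) : ub (lpoly Q) ((size Q)%:Z - 1).
Proof.
move=> e he; rewrite /lpoly; case: ifP => // h0.
rewrite nth_default //. move: he h0. move: (size Q) => s. lia.
Qed.

Lemma lpoly_laurent (Q : {poly K}) : is_laurent (lpoly Q).
Proof. by exists ((size Q)%:Z - 1); apply: lpoly_ub. Qed.

Lemma lpoly_neg (Q : {poly K}) e : e < 0 -> lpoly Q e = 0.
Proof. by rewrite /lpoly; case: ifP => //; lia. Qed.

Lemma lpoly_nat (Q : {poly K}) (n : nat) : lpoly Q n%:Z = Q`_n.
Proof. by rewrite /lpoly (_ : (0 <= n%:Z) = true). Qed.

Lemma lone0 : lone K 0 = 1.
Proof. by rewrite /lone (lpoly_nat 1 0) coef1. Qed.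

Lemma loneN0 e : e != 0 -> lone K e = 0.
Proof.
move=> he; rewrite /lone /lpoly; case: ifP => // h.
by rewrite coef1; case: eqP => //; lia.
Qed.

Lemma lone_laurent : is_laurent (lone K).
Proof. exact: lpoly_laurent. Qed.

Lemma lmul1 x : is_laurent x -> lmul (lone K) x = x.
Proof.
move=> lx; have l1 := lone_laurent; apply: funext => e; rewrite lmulE //.
rewrite (@fsum1 _ _ 0) ?lone0 ?subr0 ?mul1r // => i hi.
by rewrite loneN0 ?mul0r.
Qed.

Lemma lpolyM (Q S : {poly K}) : lpoly (Q * S) = lmul (lpoly Q) (lpoly S).
Proof.
have l1 := lpoly_laurent Q; have l2 := lpoly_laurent S.
apply: funext => e; rewrite lmulE //.
case: (ltP e 0) => he.
  rewrite lpoly_neg // fsum0 // => i.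
  case: (ltP i 0) => hi; first by rewrite lpoly_neg ?mul0r.
  by rewrite (@lpoly_neg S (e - i)) ?mulr0 //; lia.
have [n ->] : exists n : nat, e = n%:Z by exists (absz e); lia.
rewrite lpoly_nat coefM (@fsumE _ _ 0 n); last first.
  move=> i /nz_mul [h1 h2].
  have : 0 <= i by apply: contraR h1; rewrite -ltNge => /lpoly_neg ->.
  have : 0 <= n%:Z - i by apply: contraR h2; rewrite -ltNge => /lpoly_neg ->.
  lia.
rewrite /isum (_ : absz (Num.max 0 (n%:Z - 0 + 1)) = n.+1); last by lia.
apply: eq_bigr => [[k hk]] _ /=.
rewrite add0r lpoly_nat (_ : n%:Z - k%:Z = (n - k)%N%:Z) ?lpoly_nat //; lia.
Qed.

Lemma lpolyD (Q S : {poly K}) : lpoly (Q + S) = fun e => lpoly Q e + lpoly S e.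
Proof.
apply: funext => e; rewrite /lpoly; case: ifP => _; by rewrite ?coefD ?addr0.
Qed.

Lemma lpolyN (Q : {poly K}) : lpoly (- Q) = fun e => - lpoly Q e.
Proof.
apply: funext => e; rewrite /lpoly; case: ifP => _; by rewrite ?coefN ?oppr0.
Qed.

Lemma lpoly_inj (Q S : {poly K}) : lpoly Q = lpoly S -> Q = S.
Proof.
move=> h; apply/polyP => n.
by rewrite -!lpoly_nat h.
Qed.

End LSeries.


Section InvC.
Variable K : fieldType.
Variables (x : lseries K) (h : int).
Hypotheses (xh : x h != 0) (ux : ub x h).

Let r (i : nat) := x (h - i%:Z).

Fixpoint cs (j : nat) : seq K :=
  match j with
  | 0 => [:: (r 0)^-1]
  | j'.+1 => rcons (cs j')
      (- (r 0)^-1 * \sum_(i < j'.+1) r i.+1 * nth 0 (cs j') (j' - i))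
  end.

Definition cc j := nth 0 (cs j) j.

Lemma size_cs j : size (cs j) = j.+1.
Proof. by elim: j => //= j IH; rewrite size_rcons IH. Qed.

Lemma nth_cs j k : (k <= j)%N -> nth 0 (cs j) k = cc k.
Proof.
elim: j k => [|j IH] k hk.
  by move: hk; rewrite leqn0 => /eqP ->.
case: (ltngtP k j.+1) hk => // [hk _|-> _]; last by [].
by rewrite /= nth_rcons size_cs hk IH.
Qed.

Lemma cc_rec j : cc j.+1 = - (r 0)^-1 * \sum_(i < j.+1) r i.+1 * cc (j - i).
Proof.
rewrite /cc /= nth_rcons size_cs ltnn eqxx; congr (_ * _).
by apply: eq_bigr => i _; rewrite nth_cs // leq_subr.
Qed.

Lemma r0_neq0 : r 0 != 0.
Proof. by rewrite /r subr0. Qed.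

Lemma conv j : \sum_(k < j.+1) r k * cc (j - k) = (j == 0)%:R.
Proof.
case: j => [|j].
  by rewrite big_ord1 /cc /= mulfV // r0_neq0.
rewrite big_ord_recl subn0 cc_rec.
rewrite (eq_bigr (fun i : 'I_j.+1 => r i.+1 * cc (j - i))) //.
rewrite mulrA mulrN mulfV ?r0_neq0 // mulN1r addNr //.
Qed.

Definition yinv : lseries K :=
  fun e => if e <= - h then cc (absz (- h - e)) else 0.

Lemma yinv_ub : ub yinv (- h).
Proof. by move=> e he; rewrite /yinv; case: ifP => //; lia. Qed.

Lemma yinv_prod : lmul x yinv = lone K.
Proof.
have lx : is_laurent x by exists h.
have ly : is_laurent yinv by exists (- h); exact: yinv_ub.
apply: funext => e; rewrite lmulE //.
case: (ltP 0 e) => he.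
  rewrite loneN0; last by lia.
  apply: fsum0 => i; apply/eqP/negPn/negP.
  move=> /nz_mul [/(ub_nz ux) h1 /(ub_nz yinv_ub) h2]; lia.
have [j ej] : exists j : nat, e = - j%:Z by exists (absz e); lia.
rewrite -(fsum_refl h (fin_mulF e lx ly)).
rewrite (@fsumE _ _ 0 j%:Z); last first.
  move=> k /nz_mul [/(ub_nz ux) h1 /(ub_nz yinv_ub) h2]; lia.
rewrite /isum (_ : absz (Num.max 0 (j%:Z - 0 + 1)) = j.+1); last by lia.
have -> : lone K e = (j == 0)%:R.
  case: (eqVneq j 0%N) => [j0|jn0].
    by rewrite ej j0 lone0.
  by rewrite loneN0 //; lia.
rewrite -(conv j); apply: eq_bigr => [[k hk]] _ /=.
rewrite add0r /r /yinv; case: ifP; last by lia.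
move=> _; congr (_ * cc _); lia.
Qed.

End InvC.

Section TopEx.
Variable K : fieldType.

Lemma exists_top (x : lseries K) e0 : is_laurent x -> x e0 != 0 ->
  exists h, x h != 0 /\ ub x h.
Proof.
move=> lx xe0; have ub0 := bnd_ub lx.
have hle := ub_nz ub0 xe0.
suff H : forall (n : nat) b, ub x b -> e0 + n%:Z = b -> exists h, x h != 0 /\ ub x h.
  by apply: (H (absz (bnd x - e0)) (bnd x)) => //; lia.
elim => [|n IH] b ubb eb.
  by exists e0; split => //; rewrite -(addr0 e0) eb.
case: (eqVneq (x b) 0) => [xb0|xbn0]; last by exists b.
apply: (IH (b - 1)); last by lia.
move=> e he; case: (eqVneq e b) => [->//|neb]; apply: ubb; lia.
Qed.

End TopEx.


Section LaurType.
Variable K : fieldType.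

Record laur := Laur { lval : lseries K ; lvalP : `[< is_laurent lval >] }.

HB.instance Definition _ := [isSub for lval].
HB.instance Definition _ := [Equality of laur by <:].
HB.instance Definition _ := [Choice of laur by <:].

Lemma laurP (x : laur) : is_laurent (lval x).
Proof. by case: x => f p /=; apply/asboolP. Qed.

Definition mkL (f : lseries K) (H : is_laurent f) : laur := Laur (asboolT H).

Lemma mkLK f H : lval (@mkL f H) = f.
Proof. by []. Qed.

Lemma laurE (x y : laur) : (forall e, lval x e = lval y e) -> x = y.
Proof. by move=> h; apply: val_inj; apply: funext. Qed.

Lemma lzero_laurent : is_laurent (fun _ : int => (0 : K)).
Proof. by exists 0. Qed.

Lemma ladd_laurent (f g : lseries K) : is_laurent f -> is_laurent g ->
  is_laurent (fun e => f e + g e).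
Proof.
move=> /bnd_ub uf /bnd_ub ug; exists (Num.max (bnd f) (bnd g)) => e he.
by rewrite uf ?ug ?addr0 //; lia.
Qed.

Lemma lopp_laurent (f : lseries K) : is_laurent f -> is_laurent (fun e => - f e).
Proof. by move=> [h uh]; exists h => e /uh ->; rewrite oppr0. Qed.

Definition lz : laur := mkL lzero_laurent.
Definition ladd (x y : laur) : laur := mkL (ladd_laurent (laurP x) (laurP y)).
Definition lopp (x : laur) : laur := mkL (lopp_laurent (laurP x)).

Lemma laddA : associative ladd.
Proof. by move=> x y z; apply: laurE => e /=; rewrite addrA. Qed.
Lemma laddC : commutative ladd.
Proof. by move=> x y; apply: laurE => e /=; rewrite addrC. Qed.
Lemma ladd0 : left_id lz ladd.
Proof. by move=> x; apply: laurE => e /=; rewrite add0r. Qed.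
Lemma laddN : left_inverse lz lopp ladd.
Proof. by move=> x; apply: laurE => e /=; rewrite addNr. Qed.

HB.instance Definition _ := GRing.isZmodule.Build laur laddA laddC ladd0 laddN.

Definition lo : laur := mkL (@lone_laurent K).
Definition lm (x y : laur) : laur := mkL (lmul_laurent (laurP x) (laurP y)).

Lemma lmA : associative lm.
Proof. by move=> x y z; apply: val_inj; rewrite /= lmulA //; exact: laurP. Qed.
Lemma lmC : commutative lm.
Proof. by move=> x y; apply: val_inj; rewrite /= lmulC //; exact: laurP. Qed.
Lemma lm1 : left_id lo lm.
Proof. by move=> x; apply: val_inj; rewrite /= lmul1 //; exact: laurP. Qed.
Lemma lmDl : left_distributive lm ladd.
Proof. by move=> x y z; apply: val_inj; rewrite /= lmulDl //; exact: laurP. Qed.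
Lemma lo_neq0 : lo != lz.
Proof.
apply/eqP => /(congr1 (fun x => lval x 0)) /=.
by rewrite lone0 => /eqP; rewrite oner_eq0.
Qed.

HB.instance Definition _ := GRing.Zmodule_isComNzRing.Build laur lmA lmC lm1 lmDl lo_neq0.

Lemma lvalM (x y : laur) : lval (x * y) = lmul (lval x) (lval y).
Proof. by []. Qed.
Lemma lvalD (x y : laur) e : lval (x + y) e = lval x e + lval y e.
Proof. by []. Qed.
Lemma lvalN (x : laur) e : lval (- x) e = - lval x e.
Proof. by []. Qed.
Lemma lvalB (x y : laur) e : lval (x - y) e = lval x e - lval y e.
Proof. by []. Qed.
Lemma lval0 e : lval (0 : laur) e = 0.
Proof. by []. Qed.
Lemma lval1 : lval (1 : laur) = lone K.
Proof. by []. Qed.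

Lemma laur_neq0 (x : laur) : x != 0 -> exists e, lval x e != 0.
Proof.
move=> hx; apply: contra_notP (negP hx) => H; apply/eqP; apply: laurE => e.
by rewrite lval0; apply/eqP/negPn/negP => he; apply: H; exists e.
Qed.

Lemma exists_linv (x : laur) : x != 0 -> exists y : laur, y * x = 1.
Proof.
move=> /laur_neq0 [e0 he0].
have [h [xh uh]] := exists_top (laurP x) he0.
have ly : is_laurent (yinv (lval x) h) by exists (- h); apply: yinv_ub.
exists (mkL ly); rewrite mulrC; apply: val_inj.
exact: yinv_prod.
Qed.

Definition linvL (x : laur) : laur := xget 0 [set y : laur | y * x = 1].

Lemma linvL_mulVf (x : laur) : x != 0 -> linvL x * x = 1.
Proof. by move=> /exists_linv ex; apply: (xgetPex 0 ex). Qed.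

Lemma linvL0 : linvL 0 = 0.
Proof.
apply: xgetPN => y /=; rewrite mulr0 => /esym/eqP; by rewrite oner_eq0.
Qed.

HB.instance Definition _ := GRing.ComNzRing_isField.Build laur linvL_mulVf linvL0.

End LaurType.


Section LaurFacts.
Variable K : fieldType.
Local Notation L := (laur K).

Definition lpolyL (Q : {poly K}) : L := mkL (lpoly_laurent Q).

Lemma lpolyLE Q : lval (lpolyL Q) = lpoly Q.
Proof. by []. Qed.

Lemma lpolyLM Q S : lpolyL (Q * S) = lpolyL Q * lpolyL S.
Proof. by apply: val_inj; rewrite /= lpolyM. Qed.

Lemma lpolyLD Q S : lpolyL (Q + S) = lpolyL Q + lpolyL S.
Proof. by apply: laurE => e; rewrite lvalD !lpolyLE lpolyD. Qed.

Lemma lpolyLN Q : lpolyL (- Q) = - lpolyL Q.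
Proof. by apply: laurE => e; rewrite lvalN !lpolyLE lpolyN. Qed.

Lemma lpolyLB Q S : lpolyL (Q - S) = lpolyL Q - lpolyL S.
Proof. by rewrite lpolyLD lpolyLN. Qed.

Lemma lpolyL1 : lpolyL 1 = 1.
Proof. by apply: val_inj. Qed.

Lemma lpolyL0 : lpolyL 0 = 0.
Proof. by apply: laurE => e; rewrite lpolyLE lval0 /lpoly coef0; case: ifP. Qed.

Lemma lpolyLX Q n : lpolyL (Q ^+ n) = lpolyL Q ^+ n.
Proof. by elim: n => [|n IH]; rewrite ?expr0 ?lpolyL1 // !exprS lpolyLM IH. Qed.

Lemma lpolyL_inj Q S : lpolyL Q = lpolyL S -> Q = S.
Proof. by move=> /(congr1 (@lval K)); rewrite !lpolyLE => /lpoly_inj. Qed.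

Lemma lpolyL_eq0 Q : (lpolyL Q == 0) = (Q == 0).
Proof.
apply/eqP/eqP => [h|->]; last exact: lpolyL0.
by apply: lpolyL_inj; rewrite h lpolyL0.
Qed.

Lemma lexpE (x : L) n : lexp (lval x) n = lval (x ^+ n).
Proof.
elim: n => [|n IH] //=.
by rewrite /lexp /= -/(lexp _ _) IH exprS lvalM.
Qed.

Lemma lsubE (x y : L) : lsub (lval x) (lval y) = lval (x - y).
Proof. by apply: funext => e; rewrite lvalB. Qed.

Lemma linvE (x : L) : x != 0 -> linv (lval x) = lval (x^-1).
Proof.
move=> hx; apply: funext => e; rewrite /linv.
apply: xget_unique.
  by exists (lval x^-1); split => //; [exact: laurP | rewrite -lvalM mulfV].
move=> a [y [ly hy <-]].
have : mkL ly = x^-1.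
  have h1 : x * mkL ly = 1 by apply: val_inj; rewrite /= hy.
  by rewrite -[mkL ly]mul1r -(mulVf hx) -mulrA h1 mulr1.
by move=> <-.
Qed.

Lemma lmul_lval (x y : L) : lmul (lval x) (lval y) = lval (x * y).
Proof. by []. Qed.

Definition top (x : L) (h : int) := lval x h != 0 /\ ub (lval x) h.

Lemma ub_mul (x y : L) hx hy : ub (lval x) hx -> ub (lval y) hy -> ub (lval (x * y)) (hx + hy).
Proof. exact: lmul_ub. Qed.

Lemma top_inv (x : L) h : top x h -> ub (lval x^-1) (- h).
Proof.
move=> [xh uh].
have ly : is_laurent (yinv (lval x) h) by exists (- h); apply: yinv_ub.
have hx : x != 0 by apply: contraNneq xh => ->.
have e1 : x * mkL ly = 1 by apply: val_inj; exact: yinv_prod.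
have -> : x^-1 = mkL ly.
  by rewrite -[mkL ly]mul1r -(mulVf hx) -mulrA e1 mulr1.
exact: yinv_ub.
Qed.

Lemma ub_one : ub (lval (1 : L)) 0.
Proof. by move=> e he; rewrite lval1 loneN0 //; lia. Qed.

Lemma ub_exp (x : L) h n : ub (lval x) h -> ub (lval (x ^+ n)) (n%:Z * h).
Proof.
move=> u; elim: n => [|n IH]; first by rewrite expr0 mul0r; exact: ub_one.
rewrite exprSr; apply: ub_le (ub_mul IH u) _; lia.
Qed.

End LaurFacts.


Section Subst.
Variable K : fieldType.
Local Notation L := (laur K).
Variable P : {poly K}.
Hypothesis hP : (1 < size P)%N.

Let PL := lpolyL P.
Let d : int := ((size P).-1)%:Z.

Lemma d_ge1 : 1 <= d.
Proof. rewrite /d; lia. Qed.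

Lemma PL_neq0 : PL != 0.
Proof. by rewrite /PL lpolyL_eq0 -size_poly_gt0; lia. Qed.

Lemma PL_ub : ub (lval PL) d.
Proof. rewrite /PL lpolyLE; apply: (ub_le (@lpoly_ub _ P)); rewrite /d; lia. Qed.

Lemma PL_top : top PL d.
Proof.
split; last exact: @PL_ub.
rewrite lpolyLE /d lpoly_nat -lead_coefE lead_coef_eq0 -size_poly_gt0; lia.
Qed.

Definition pw (e : int) : lseries K := lval (PL ^ e).

Lemma pw_nat (k : nat) : pw k%:Z = lpoly (P ^+ k).
Proof. by rewrite /pw -lpolyLE lpolyLX. Qed.

Lemma lpowzE e : lpowz P e = pw e.
Proof.
rewrite /lpowz; case: ifP => he.
  have -> : e = (absz e)%:Z by lia.
  by rewrite pw_nat.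
rewrite -[lpoly P]/(lval PL) linvE ?PL_neq0 // lexpE /pw.
move: he; case: e => [n|n] //= _.
by rewrite exprVn.
Qed.

Lemma pw_ub e : ub (pw e) (e * d).
Proof.
case: (lerP 0 e) => he.
  have -> : e = (absz e)%:Z by lia.
  exact: ub_exp (@PL_ub).
have -> : e = - (absz e)%:Z by lia.
rewrite /pw -exprnN -exprVn.
apply: ub_le; first by apply: ub_exp; apply: top_inv; exact: PL_top.
lia.
Qed.

Lemma pw_nz e m : pw e m != 0 -> m <= e * d.
Proof. exact: ub_nz (@pw_ub e). Qed.

Lemma pw_pos e m : 0 <= e -> pw e m != 0 -> 0 <= m.
Proof.
move=> he; have -> : e = (absz e)%:Z by lia.
rewrite pw_nat; apply: contraR; rewrite -ltNge => hm; rewrite lpoly_neg //.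
Qed.

Lemma pw_low e m : pw e m != 0 -> Num.min m 0 <= e.
Proof.
move=> h; case: (lerP 0 e) => he; first lia.
have := pw_nz h; have := d_ge1; nia.
Qed.

Lemma pw_laurent e : is_laurent (pw e).
Proof. exact: laurP. Qed.

Lemma pw_mul a b : lmul (pw a) (pw b) = pw (a + b).
Proof. by rewrite /pw lmul_lval expfzDr // PL_neq0. Qed.

Lemma fin_sig (X : lseries K) m : is_laurent X -> fin (fun e => X e * pw e m).
Proof.
move=> /bnd_ub u; apply: (@fin_supp _ _ (Num.min m 0) (bnd X)) => e.
move=> /nz_mul [/(ub_nz u) h1 /pw_low h2]; lia.
Qed.

Lemma sigE (X : lseries K) m : is_laurent X ->
  lsubst X P m = fsum (fun e => X e * pw e m).
Proof.
move=> lX; have u := bnd_ub lX; rewrite /lsubst.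
under eq_fun => e do rewrite lpowzE.
symmetry; apply: fsumE => e.
move=> /nz_mul [/(ub_nz u) h1 /pw_low h2]; lia.
Qed.

Lemma sig_ub (X : lseries K) h : ub X h -> ub (lsubst X P) (h * d).
Proof.
move=> u m hm; rewrite sigE; last by exists h.
apply: fsum0 => e; apply/eqP/negPn/negP => /nz_mul [/(ub_nz u) h1 /pw_nz h2].
have : e * d <= h * d by apply: ler_wpM2r => //; have := d_ge1; lia.
lia.
Qed.

Lemma sig_laurent (X : lseries K) : is_laurent X -> is_laurent (lsubst X P).
Proof. by move=> /bnd_ub u; exists (bnd X * d); exact: sig_ub. Qed.

Definition sigL (x : L) : L := mkL (sig_laurent (laurP x)).

Lemma sigLE (x : L) m : lval (sigL x) m = fsum (fun e => lval x e * pw e m).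
Proof. by rewrite /= sigE //; exact: laurP. Qed.

Lemma sigL_ub (x : L) h : ub (lval x) h -> ub (lval (sigL x)) (h * d).
Proof. exact: sig_ub. Qed.

Lemma sigLD x y : sigL (x + y) = sigL x + sigL y.
Proof.
apply: laurE => m; rewrite lvalD !sigLE -fsumD; try exact: (fin_sig _ (laurP _)).
by apply: eq_fsum => e; rewrite lvalD mulrDl.
Qed.

Lemma sigLN x : sigL (- x) = - sigL x.
Proof.
apply: laurE => m; rewrite lvalN !sigLE -[RHS]mulN1r -fsumMl; last exact: (fin_sig _ (laurP _)).
by apply: eq_fsum => e; rewrite lvalN mulN1r mulNr.
Qed.

Lemma sigLB x y : sigL (x - y) = sigL x - sigL y.
Proof. by rewrite sigLD sigLN. Qed.

Lemma sigL_poly Q : sigL (lpolyL Q) = lpolyL (Q \Po P).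
Proof.
apply: laurE => m; rewrite sigLE !lpolyLE.
case: (ltP m 0) => hm.
  rewrite lpoly_neg // fsum0 // => e; apply/eqP/negPn/negP => /nz_mul [h1 h2].
  have he : 0 <= e by apply: contraR h1; rewrite -ltNge => /lpoly_neg ->.
  have := pw_pos he h2; lia.
have [n ->] : exists n : nat, m = n%:Z by exists (absz m); lia.
rewrite lpoly_nat comp_polyE coef_sum.
rewrite (@fsumE _ _ 0 ((size Q)%:Z - 1)); last first.
  move=> e /nz_mul [h1 _].
  have := ub_nz (@lpoly_ub _ Q) h1.
  have : 0 <= e by apply: contraR h1; rewrite -ltNge => /lpoly_neg ->.
  lia.
rewrite /isum (_ : absz (Num.max 0 ((size Q)%:Z - 1 - 0 + 1)) = size Q); last by lia.
apply: eq_bigr => [[k hk]] _ /=.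
by rewrite add0r lpoly_nat pw_nat lpoly_nat coefZ.
Qed.

Lemma sigL1 : sigL 1 = 1.
Proof. by rewrite -lpolyL1 sigL_poly -polyC1 comp_polyC. Qed.

Lemma sigLM x y : sigL (x * y) = sigL x * sigL y.
Proof.
apply: laurE => m.
set X := lval x; set Y := lval y.
have lX : is_laurent X by exact: laurP.
have lY : is_laurent Y by exact: laurP.
have ux := bnd_ub lX; have uy := bnd_ub lY.
set hx := bnd X; set hy := bnd Y.
have uSY : ub (lval (sigL y)) (hy * d) by exact: sigL_ub.
have dge := d_ge1.
rewrite sigLE.
rewrite (@eq_fsum _ _ (fun e => fsum (fun a => X a * Y (e - a) * pw e m))); last first.
  by move=> e; rewrite lvalM lmulE // -fsumMr //; apply: fin_mulF.
rewrite fsum_exchange; last first.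
  exists (`|m| + `|hx| + `|hy|) => e a.
  move=> /nz_mul [/nz_mul [/(ub_nz ux) h1 /(ub_nz uy) h2] /pw_low h3]; lia.
rewrite (@eq_fsum _ _ (fun a => fsum (fun b => X a * (Y b * pw (a + b) m)))); last first.
  move=> a; rewrite -(@fsum_shift _ _ a); last first.
    apply: (@fin_supp _ _ (Num.min m 0) (a + hy)) => e.
    move=> /nz_mul [/nz_mul [_ /(ub_nz uy) h2] /pw_low h3]; lia.
  apply: eq_fsum => b.
  have e1 : a + b - a = b by ring.
  by rewrite e1 mulrA.
rewrite lvalM lmulE; [|exact: laurP|exact: laurP].
rewrite [RHS](@eq_fsum _ _ (fun j => fsum (fun a => X a * pw a j * lval (sigL y) (m - j))));
  last by move=> j; rewrite sigLE -fsumMr //; exact: fin_sig.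
rewrite [RHS]fsum_exchange; last first.
  exists (`|m| + `|hx * d| + `|hy * d| + `|hx|) => j a.
  move=> /nz_mul [/nz_mul [/(ub_nz ux) h1 h2] /(ub_nz uSY) h3].
  have h4 := pw_nz h2; have h5 := pw_low h2.
  have h6 : a * d <= hx * d by apply: ler_wpM2r => //; lia.
  lia.
apply: eq_fsum => a.
rewrite fsumMl; last first.
  apply: (@fin_supp _ _ (Num.min m 0 - a) hy) => b.
  move=> /nz_mul [/(ub_nz uy) h1 /pw_low h2]; lia.
rewrite [RHS](@eq_fsum _ _ (fun j => X a * (pw a j * lval (sigL y) (m - j))));
  last by move=> j; rewrite mulrA.
rewrite [RHS]fsumMl; last first.
  apply: (@fin_supp _ _ (m - hy * d) (a * d)) => j.
  move=> /nz_mul [/pw_nz h1 /(ub_nz uSY) h2]; lia.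
congr (_ * _).
rewrite [RHS](@eq_fsum _ _ (fun j => fsum (fun b => pw a j * (Y b * pw b (m - j)))));
  last by move=> j; rewrite sigLE -fsumMl //; exact: fin_sig.
rewrite [RHS]fsum_exchange; last first.
  exists (`|m| + `|a * d| + `|hy * d| + `|hy|) => j b.
  move=> /nz_mul [/pw_nz h1 /nz_mul [/(ub_nz uy) h2 h3]].
  have h4 := pw_nz h3; have h5 := pw_low h3.
  have h6 : b * d <= hy * d by apply: ler_wpM2r => //; lia.
  lia.
apply: eq_fsum => b.
rewrite (@eq_fsum _ _ (fun j => Y b * (pw a j * pw b (m - j))));
  last by move=> j; rewrite mulrCA.
rewrite fsumMl; last exact: fin_mulF (pw_laurent a) (pw_laurent b).
by rewrite -lmulE ?pw_mul //; exact: pw_laurent.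
Qed.

End Subst.


Section CF.
Variable K : fieldType.
Local Notation L := (laur K).

Definition cfL (x : L) (A : nat -> {poly K}) :=
  exists T : nat -> L, T 0%N = x /\ forall n,
    (forall e : nat, lval (T n) e%:Z = (A n)`_e) /\ T n.+1 * (T n - lpolyL (A n)) = 1.

Lemma is_cfP (x : L) A : is_cf (lval x) A <-> cfL x A.
Proof.
split.
  move=> [th [th0 H]].
  have Hl n : is_laurent (th n) by case: (H n).
  exists (fun n => mkL (Hl n)); split.
    by apply: val_inj; rewrite /= th0.
  move=> n; case: (H n) => _ pp eq; split; first exact: pp.
  by apply: val_inj; exact: eq.
move=> [T [T0 H]]; exists (fun n => lval (T n)); split; first by rewrite T0.
move=> n; case: (H n) => pp eq; split; first exact: laurP.
  exact: pp.
exact: (congr1 (@lval K) eq).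
Qed.

Lemma inv_uniq (y s : L) : y * s = 1 -> y = s^-1.
Proof.
move=> h; have hs : s != 0.
  by apply: contraTneq isT => s0; move: h; rewrite s0 mulr0 => /eqP; rewrite eq_sym oner_eq0.
by rewrite -[y]mulr1 -(mulfV hs) mulrA h mul1r.
Qed.

Lemma cfL_uniq (x : L) A B : cfL x A -> cfL x B -> A = B.
Proof.
move=> [T [T0 HT]] [S [S0 HS]].
suff H : forall n, T n = S n /\ A n = B n by apply: funext => n; case: (H n).
have AB : forall n, T n = S n -> A n = B n.
  move=> n e; apply/polyP => i.
  by case: (HT n) => <- _; case: (HS n) => <- _; rewrite e.
elim => [|n [e1 e2]]; first by split; rewrite ?T0 ?S0 //; apply: AB; rewrite T0 S0.
have e3 : T n.+1 = S n.+1.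
  case: (HT n) => _ /inv_uniq ->; case: (HS n) => _ /inv_uniq ->.
  by rewrite e1 e2.
by split => //; apply: AB.
Qed.

Definition lratL (x : L) := exists u v : {poly K}, v != 0 /\ lpolyL v * x = lpolyL u.

Lemma lratP (x : L) : lrational (lval x) <-> lratL x.
Proof.
split => [[u [v [hv e]]]|[u [v [hv e]]]]; exists u, v; split => //.
  by apply: val_inj; exact: e.
exact: (congr1 (@lval K) e).
Qed.

Lemma lpolyL_neq0 (v : {poly K}) : v != 0 -> lpolyL v != 0.
Proof. by rewrite lpolyL_eq0. Qed.

Lemma cfL_irr (x : L) A : cfL x A -> ~ lratL x.
Proof.
move=> [T [T0 HT]] [u0 [v0 [hv0 e0]]].
suff H : forall n, exists u v : {poly K}, [/\ v != 0, (size v + n <= size v0)%N &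
                                            lpolyL v * T n = lpolyL u].
  have [u [v [hv hs _]]] := H (size v0).
  move: hs; rewrite -size_poly_gt0 in hv; lia.
elim => [|n [u [v [hv hs e]]]].
  by exists u0, v0; rewrite addn0 T0.
case: (HT n) => pp eq.
set s := T n - lpolyL (A n).
have es : lpolyL (u - A n * v) = lpolyL v * s.
  by rewrite lpolyLB lpolyLM -e /s; ring.
have us : ub (lval s) (-1).
  move=> i hi; have [k ->] : exists k : nat, i = k%:Z by exists (absz i); lia.
  by rewrite /s lvalB pp lpolyLE lpoly_nat subrr.
have uv : ub (lval (lpolyL v)) ((size v)%:Z - 1) by apply: lpoly_ub.
have ur := ub_mul uv us.
set r := u - A n * v.
have sr : (size r < size v)%N.
  have hv' : (0 < size v)%N by rewrite size_poly_gt0.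
  suff : (size r <= (size v).-1)%N by lia.
  apply/leq_sizeP => j hj.
  rewrite -lpoly_nat -lpolyLE es; apply: ur; lia.
have rn0 : r != 0.
  apply/eqP => r0; move: es; rewrite -/r r0 lpolyL0 => /esym/eqP.
  rewrite mulf_eq0 (negbTE (lpolyL_neq0 hv)) /= => /eqP s0.
  by move: eq; rewrite -/s s0 mulr0 => /eqP; rewrite eq_sym oner_eq0.
exists v, r; split => //; first lia.
by rewrite es -mulrA [s * _]mulrC eq mulr1.
Qed.

Definition fl (x : L) : {poly K} :=
  \poly_(i < (absz (bnd (lval x))).+1) lval x i%:Z.

Lemma fl_pp (x : L) (e : nat) : lval x e%:Z = (fl x)`_e.
Proof.
rewrite coef_poly; case: ltnP => // he.
apply: (bnd_ub (laurP x)); lia.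
Qed.

Fixpoint Tseq (x : L) (n : nat) : L :=
  match n with
  | 0 => x
  | n'.+1 => (Tseq x n' - lpolyL (fl (Tseq x n')))^-1
  end.

Lemma Tseq_irr (x : L) n : ~ lratL x -> ~ lratL (Tseq x n).
Proof.
move=> hx; elim: n => [//|n IH] /=.
set s := Tseq x n - lpolyL (fl (Tseq x n)).
have sn0 : s != 0.
  apply/eqP => s0; apply: IH; exists (fl (Tseq x n)), 1; split; first exact: oner_neq0.
  by rewrite lpolyL1 mul1r; apply/eqP; rewrite -subr_eq0 -/s s0.
move=> [u [v [hv e]]].
have un0 : u != 0.
  apply/eqP => u0; move: e; rewrite u0 lpolyL0 => /eqP.
  by rewrite mulf_eq0 invr_eq0 (negbTE sn0) (negbTE (lpolyL_neq0 hv)).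
apply: IH; exists (v + u * fl (Tseq x n)), u; split => //.
have e2 : lpolyL u * s = lpolyL v.
  by rewrite -e -mulrA mulVf ?mulr1.
by rewrite lpolyLD lpolyLM -e2 /s; ring.
Qed.

Lemma cfL_exists (x : L) : ~ lratL x -> cfL x (fun n => fl (Tseq x n)).
Proof.
move=> hx; exists (Tseq x); split => // n; split; first exact: fl_pp.
rewrite /= mulVf //; apply/eqP => s0; apply: (@Tseq_irr x n hx).
exists (fl (Tseq x n)), 1; split; first exact: oner_neq0.
by rewrite lpolyL1 mul1r; apply/eqP; rewrite -subr_eq0 s0.
Qed.

End CF.


Section Transport.
Variable K : fieldType.
Local Notation L := (laur K).
Variable P : {poly K}.
Hypothesis hP : (1 < size P)%N.
Local Notation Sg := (sigL hP).

Lemma sigL0 : Sg 0 = 0.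
Proof. by apply: (addrI (Sg 0)); rewrite -sigLD !addr0. Qed.

Lemma sigL_pp (x : L) (A : {poly K}) : (forall e : nat, lval x e%:Z = A`_e) ->
  forall e : nat, lval (Sg x) e%:Z = (A \Po P)`_e.
Proof.
move=> pp e.
have us : ub (lval (x - lpolyL A)) (-1).
  move=> i hi; have [k ->] : exists k : nat, i = k%:Z by exists (absz i); lia.
  by rewrite lvalB pp lpolyLE lpoly_nat subrr.
have -> : x = lpolyL A + (x - lpolyL A) by rewrite addrC subrK.
rewrite sigLD lvalD sigL_poly lpolyLE lpoly_nat.
rewrite (@sigL_ub _ _ hP _ _ us) ?addr0 //; lia.
Qed.

Lemma cfL_sig (x : L) A : cfL x A -> cfL (Sg x) (fun n => A n \Po P).
Proof.
move=> [T [T0 HT]]; exists (fun n => Sg (T n)); split; first by rewrite T0.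
move=> n; case: (HT n) => pp eq; split; first exact: sigL_pp.
by rewrite -sigL_poly -sigLB -sigLM eq sigL1.
Qed.

Lemma sig_irr (x : L) : ~ lratL x -> ~ lratL (Sg x).
Proof.
move=> hx; apply: (@cfL_irr _ _ (fun n => fl (Tseq x n) \Po P)).
exact/cfL_sig/cfL_exists.
Qed.

Lemma sig_quad (x : L) : quadratic_irrational (lval x) -> quadratic_irrational (lval (Sg x)).
Proof.
move=> [_ hirr [a [b [c [ha H]]]]]; split.
- exact: laurP.
- by move/lratP; apply: sig_irr => /lratP.
have E : lpolyL a * (x * x) + lpolyL b * x + lpolyL c = 0.
  by apply: laurE => e; exact: H e.
have E2 := congr1 Sg E.
rewrite sigL0 !sigLD !sigLM !sigL_poly in E2.
exists (a \Po P), (b \Po P), (c \Po P); split.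
  by rewrite comp_poly_eq0.
move=> e; exact: (congr1 (fun z => lval z e) E2).
Qed.

End Transport.


Section Win.
Local Open Scope nat_scope.

Definition Wsum (f : nat -> nat) (M l : nat) := \sum_(i < l) f (M + i).

Lemma WsumE f M l : \sum_(M <= i < M + l) f i = Wsum f M l.
Proof.
rewrite -{1}(add0n M) big_addn addKn big_mkord.
by apply: eq_bigr => i _; rewrite addnC.
Qed.

Definition per (f : nat -> nat) N l := forall i, (N <= i)%N -> f (i + l) = f i.

Lemma Wsum_step f N l M : per f N l -> (N <= M)%N -> Wsum f M.+1 l = Wsum f M l.
Proof.
move=> hp hM; case: l hp => [|l] hp; first by rewrite /Wsum !big_ord0.
rewrite /Wsum big_ord_recr big_ord_recl /=.
rewrite (_ : (M.+1 + l)%N = (M + l.+1)%N); last lia.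
rewrite hp // addnC; congr (_ + _); first by congr f; lia.
apply: eq_bigr => i _; congr f; exact: addSnnS.
Qed.

Lemma Wsum_shift f N l M : per f N l -> (N <= M)%N -> Wsum f M l = Wsum f N l.
Proof.
move=> hp; elim: M => [|M IH] hM.
  by move: hM; rewrite leqn0 => /eqP ->.
case: (ltngtP N M.+1) hM => // [hlt _|-> //].
by rewrite (Wsum_step hp) ?IH //; lia.
Qed.

Lemma Wsum_mult f N l M k : per f N l -> (N <= M)%N -> Wsum f M (k * l) = (k * Wsum f M l)%N.
Proof.
move=> hp hM; elim: k => [|k IH]; first by rewrite !mul0n /Wsum big_ord0.
rewrite !mulSn (addnC l) {1}/Wsum big_split_ord /= -/(Wsum f M (k * l)) IH.
rewrite [RHS]addnC; congr (_ + _)%N.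
rewrite (Wsum_shift hp hM) -(Wsum_shift hp (M := (M + k * l)%N)); last lia.
by rewrite /Wsum; apply: eq_bigr => i _; congr f; exact: addnA.
Qed.

Lemma Wsum_indep f N1 l1 N2 l2 : per f N1 l1 -> per f N2 l2 ->
  (l2 * Wsum f N1 l1 = l1 * Wsum f N2 l2)%N.
Proof.
move=> h1 h2.
rewrite -(Wsum_shift h1 (M := (N1 + N2)%N)) ?leq_addr //.
rewrite -(Wsum_shift h2 (M := (N1 + N2)%N)) ?leq_addl //.
rewrite -(Wsum_mult _ h1) ?leq_addr // -(Wsum_mult _ h2) ?leq_addl //.
by rewrite mulnC.
Qed.

End Win.

Section Rk.
Variables (K : fieldType) (R : realType).

Lemma is_cf_uniq (y : lseries K) A B : is_cf y A -> is_cf y B -> A = B.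
Proof.
move=> hA; have ly : is_laurent y.
  by case: hA => th [<- H]; case: (H 0%N).
move: hA; rewrite -[y]/(lval (mkL ly)) => /is_cfP hA /is_cfP hB.
exact: cfL_uniq hA hB.
Qed.

Lemma ratioE (A : nat -> {poly K}) N l n :
  ratio R A N l n = (Wsum (fun i => deg (A i) - n)%N N l)%:R / (Wsum (fun i => deg (A i)) N l)%:R.
Proof. by rewrite /ratio !WsumE. Qed.

Lemma per_of (A : nat -> {poly K}) N l (g : {poly K} -> nat) :
  cf_periodic A N l -> per (fun i => g (A i)) N l.
Proof. by move=> [_ h] i hi /=; rewrite h. Qed.

Lemma cancel_ratio (a b c : nat) : (0 < a)%N -> ((a * b)%N%:R / (a * c)%N%:R : R) = b%:R / c%:R.
Proof.
move=> ha; rewrite !natrM invfM mulrACA mulfV ?mul1r //.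
by rewrite pnatr_eq0 -lt0n.
Qed.

Lemma ratio_indep (A : nat -> {poly K}) N1 l1 N2 l2 n :
  cf_periodic A N1 l1 -> cf_periodic A N2 l2 -> ratio R A N1 l1 n = ratio R A N2 l2 n.
Proof.
move=> h1 h2; have l1p : (0 < l1)%N by case: h1.
have l2p : (0 < l2)%N by case: h2.
rewrite !ratioE -(cancel_ratio _ _ l2p) -[RHS](cancel_ratio _ _ l1p).
have en := Wsum_indep (per_of (fun Q : {poly K} => (deg Q - n)%N) h1)
                      (per_of (fun Q : {poly K} => (deg Q - n)%N) h2).
have ed := Wsum_indep (per_of (@deg K) h1) (per_of (@deg K) h2).
by rewrite en ed.
Qed.

Lemma ratio_ge0 (A : nat -> {poly K}) N l n : 0 <= ratio R A N l n.
Proof. by rewrite /ratio divr_ge0. Qed.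

Lemma ratio_mono (A : nat -> {poly K}) N l n n' : (n <= n')%N ->
  ratio R A N l n' <= ratio R A N l n.
Proof.
move=> hn; rewrite /ratio ler_wpM2r ?invr_ge0 // ler_nat.
by apply: leq_sum => i _; apply: leq_sub2l.
Qed.

Lemma ratio_comp (A : nat -> {poly K}) (P : {poly K}) N l n : (1 < size P)%N ->
  ratio R A N l n <= ratio R (fun i => A i \Po P) N l n.
Proof.
move=> hP; set d := (size P).-1.
have dp : (0 < d)%N by rewrite /d; lia.
have hdeg : forall i, deg (A i \Po P) = (deg (A i) * d)%N by move=> i; rewrite /deg size_comp_poly.
rewrite !ratioE -(cancel_ratio _ _ dp).
have -> : (d * Wsum (fun i => deg (A i)) N l)%N = Wsum (fun i => deg (A i \Po P)) N l.
  by rewrite /Wsum big_distrr /=; apply: eq_bigr => i _; rewrite hdeg mulnC.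
rewrite ler_wpM2r ?invr_ge0 // ler_nat /Wsum big_distrr /=.
apply: leq_sum => i _; rewrite hdeg mulnBr mulnC.
apply: leq_sub2l; rewrite leq_pmull //.
Qed.

Lemma Rkn_eq (x : lseries K) (P : {poly K}) k n A N l :
  is_cf (lmul x (lpoly (P ^+ k))) A -> cf_periodic A N l ->
  Rkn R x P k n = ratio R A N l n.
Proof.
move=> hA hp; apply: xget_unique; first by exists A, N, l.
move=> r [B [N' [l' [hB hp' ->]]]].
have eAB := is_cf_uniq hB hA; rewrite eAB in hp' *.
exact: ratio_indep.
Qed.

Lemma Rkn_none (x : lseries K) (P : {poly K}) k n :
  ~ (exists A N l, is_cf (lmul x (lpoly (P ^+ k))) A /\ cf_periodic A N l) ->
  Rkn R x P k n = 0.
Proof.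
move=> hn; apply: xgetPN => r [A [N [l [hA hp _]]]]; apply: hn.
by exists A, N, l.
Qed.

Lemma Rkn_ge0 (x : lseries K) (P : {poly K}) k n : 0 <= Rkn R x P k n.
Proof.
case: (pselect (exists A N l, is_cf (lmul x (lpoly (P ^+ k))) A /\ cf_periodic A N l)).
  by move=> [A [N [l [hA hp]]]]; rewrite (Rkn_eq _ hA hp) ratio_ge0.
by move=> /Rkn_none ->.
Qed.

Lemma Rkn_mono (x : lseries K) (P : {poly K}) k n n' : (n <= n')%N ->
  Rkn R x P k n' <= Rkn R x P k n.
Proof.
move=> hn.
case: (pselect (exists A N l, is_cf (lmul x (lpoly (P ^+ k))) A /\ cf_periodic A N l)).
  by move=> [A [N [l [hA hp]]]]; rewrite !(Rkn_eq _ hA hp) ratio_mono.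
by move=> hno; rewrite !(Rkn_none _ hno).
Qed.

Lemma compXn (P : {poly K}) k : 'X^k \Po P = P ^+ k.
Proof.
elim: k => [|k IH]; first by rewrite !expr0 -polyC1 comp_polyC polyC1.
by rewrite !exprS comp_polyM comp_polyX IH.
Qed.

Lemma Rkn_sig (Theta : lseries K) (P : {poly K}) (hP : (1 < size P)%N) k n :
  is_laurent Theta ->
  Rkn R Theta 'X k n <= Rkn R (lsubst Theta P) P k n.
Proof.
move=> lT.
case: (pselect (exists A N l, is_cf (lmul Theta (lpoly ('X ^+ k))) A /\ cf_periodic A N l));
  last by move=> hno; rewrite (Rkn_none _ hno) Rkn_ge0.
move=> [A [N [l [hA hp]]]]; rewrite (Rkn_eq _ hA hp).
set th := mkL lT.
have e1 : lmul Theta (lpoly ('X ^+ k)) = lval (th * lpolyL ('X ^+ k)) by [].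
have e2 : lmul (lsubst Theta P) (lpoly (P ^+ k)) = lval (sigL hP (th * lpolyL ('X ^+ k))).
  by rewrite sigLM sigL_poly compXn.
have hA' : is_cf (lmul (lsubst Theta P) (lpoly (P ^+ k))) (fun i => A i \Po P).
  rewrite e2; apply/is_cfP; apply: cfL_sig; apply/is_cfP; rewrite -e1; exact: hA.
have hp' : cf_periodic (fun i => A i \Po P) N l.
  by case: hp => h0 h; split => // i hi; rewrite h.
rewrite (Rkn_eq _ hA' hp'); exact: ratio_comp.
Qed.

End Rk.


Section Final.

Lemma limn_einf_le (R : realType) (u v : (\bar R)^nat) :
  (forall k, (u k <= v k)%E) -> (limn_einf u <= limn_einf v)%E.
Proof.
move=> huv; rewrite !limn_einf_lim; apply: lee_lim.
- exact: is_cvg_einfs.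
- exact: is_cvg_einfs.
apply: nearW => n; apply: le_ereal_inf_tmp => _ [k hk <-].
apply: ge_ereal_inf; exists (u k); first by exists k.
exact: huv.
Qed.

Theorem main_gen (K : fieldType) (R : realType) (c : R) (Theta : lseries K)
  (hT : escape_of_mass Theta 'X c) (P : {poly K}) (hP : irreducible_poly P) :
  escape_of_mass (lsubst Theta P) P c.
Proof.
have hP1 : (1 < size P)%N by case: hP.
case: hT => hq hlim.
have lT : is_laurent Theta by case: hq.
split.
  exact: (@sig_quad K P hP1 (mkL lT) hq).
pose g := fun n => limn_einf (fun k => (Rkn R Theta 'X k n)%:E).
pose f := fun n => limn_einf (fun k => (Rkn R (lsubst Theta P) P k n)%:E).
have gdec : nonincreasing_seq g.
  by move=> n n' hn; apply: limn_einf_le => k; rewrite lee_fin; exact: Rkn_mono.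
have fdec : nonincreasing_seq f.
  by move=> n n' hn; apply: limn_einf_le => k; rewrite lee_fin; exact: Rkn_mono.
apply: (le_trans hlim); apply: lee_lim.
- exact: (ereal_nonincreasing_is_cvgn gdec).
- exact: (ereal_nonincreasing_is_cvgn fdec).
apply: nearW => n; apply: limn_einf_le => k; rewrite lee_fin; exact: Rkn_sig.
Qed.

End Final.

Theorem theorem1p19 (R : realType) (p : nat) (hp : prime p) (c : R)
  (hc0 : 0 <= c) (hc1 : c <= 1) (Theta : lseries 'F_p)
  (hT : escape_of_mass Theta 'X c)
  (P : {poly 'F_p}) (hP : irreducible_poly P) :
  escape_of_mass (lsubst Theta P) P c.
Proof. exact: main_gen hT P hP. Qed.
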